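(* Assume in addition that $-K_{X_\Sigma}-\sum_{j=1}^cc_1(\mathcal L_j)$ is nef. Then the set $$W(\Sigma')=\bigcup_{\langle\underline a_{i_1},\dots,\underline a_{i_n}\rangle\in\Sigma(n)}\mathrm{Conv}(\underline 0,\underline a'_{i_1},\dots,\underline a'_{i_n},\underline e_{n+1},\dots,\underline e_{n+c})$$ is convex and equals $\mathrm{Conv}(\underline 0,\underline a'_1,\dots,\underline a'_{m+c})$.
   Context: $X_\Sigma$ is a smooth projective toric variety given by a complete smooth fan $\Sigma$ in $\mathbb R^n$ with primitive ray generators $\underline a_1,\dots,\underline a_m$; $\Sigma(n)$ is the set of $n$-dimensional cones. $\mathcal L_1,\dots,\mathcal L_c$ are nef line bundles; choose $d_{ji}\ge0$ with $\mathcal O(\sum_{i=1}^md_{ji}D_i)\cong\mathcal L_j$, where $D_i$ are the torus-invariant divisors. $\underline a'_i=(\underline a_i,d_{1i},\dots,d_{ci})\in\mathbb R^{n+c}$ for $i\le m$ and $\underline a'_{m+j}=\underline e_{n+j}$. $\Sigma'$ is the fan in $\mathbb R^{n+c}$ with cones $\langle\underline a'_{i_1},\dots,\underline a'_{i_k},\underline e_{n+j_1},\dots,\underline e_{n+j_l}\rangle$ for $\langle\underline a_{i_1},\dots,\underline a_{i_k}\rangle\in\Sigma$. *)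

(* Defs.v *)
From HB Require Import structures.
From mathcomp Require Import all_boot all_order all_algebra.
Set Implicit Arguments. Unset Strict Implicit. Unset Printing Implicit Defensive.
Import Order.TTheory GRing.Theory Num.Theory.
Local Open Scope ring_scope.

(* Data: ray generators a : 'I_m -> Z^n (as integer row vectors),
   maximal cones S : {set {set 'I_m}} (each cone given by the set of indices
   of its ray generators; Sigma is simplicial, so cones are determined by
   subsets of rays). *)

Definition vecR (R : realFieldType) (n : nat) (v : 'rV[int]_n) : 'rV[R]_n :=
  map_mx (fun z : int => z%:~R) v.

Definition cone_of (R : realFieldType) (n m : nat) (a : 'I_m -> 'rV[int]_n)
  (s : {set 'I_m}) (x : 'rV[R]_n) : Prop :=
  exists lam : 'I_m -> R, (forall i, 0 <= lam i) /\
    x = \sum_(i in s) lam i *: vecR R (a i).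

Definition unimodular_cone (n m : nat) (a : 'I_m -> 'rV[int]_n)
  (s : {set 'I_m}) : Prop :=
  #|s| = n /\
  (forall v : 'rV[int]_n, exists lam : 'I_m -> int, v = \sum_(i in s) lam i *: a i) /\
  (forall lam : 'I_m -> int, \sum_(i in s) lam i *: a i = 0 ->
      forall i, i \in s -> lam i = 0).

(* S is the set of n-dimensional cones Sigma(n) of a complete smooth fan Sigma
   (Sigma = all faces of the cones in S) with primitive ray generators a. *)
Definition complete_smooth_fan (R : realFieldType) (n m : nat)
  (a : 'I_m -> 'rV[int]_n) (S : {set {set 'I_m}}) : Prop :=
  [/\ injective a,
      (forall i, exists2 s, s \in S & i \in s),
      (forall s, s \in S -> unimodular_cone a s),
      (forall s t, s \in S -> t \in S -> forall x : 'rV[R]_n,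
          cone_of a s x -> cone_of a t x -> cone_of a (s :&: t) x)
    & (forall x : 'rV[R]_n, exists2 s, s \in S & cone_of a s x)].

Definition dotv (R : realFieldType) (n : nat) (u v : 'rV[R]_n) : R :=
  (u *m v^T) 0 0.

(* The torus-invariant divisor sum_i D i * D_i is nef: its support function
   (linear on each maximal cone sigma, with value D i at a_i) is convex, i.e.
   the linear function u_sigma with <u_sigma, a_i> = D i for i in sigma
   satisfies <u_sigma, a_j> <= D j for all j. *)
Definition nef_divisor (R : realFieldType) (n m : nat) (a : 'I_m -> 'rV[int]_n)
  (S : {set {set 'I_m}}) (D : 'I_m -> int) : Prop :=
  forall s, s \in S -> exists u : 'rV[R]_n,
    (forall i, i \in s -> dotv u (vecR R (a i)) = (D i)%:~R) /\
    (forall j, dotv u (vecR R (a j)) <= (D j)%:~R).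

Definition aprime (R : realFieldType) (n m c : nat) (a : 'I_m -> 'rV[int]_n)
  (d : 'I_c -> 'I_m -> nat) (k : 'I_(m + c)) : 'rV[R]_(n + c) :=
  match split k with
  | inl i => row_mx (vecR R (a i)) (\row_(j < c) ((d j i)%:R : R))
  | inr j => row_mx 0 (delta_mx 0 j)
  end.

Definition conv (R : realFieldType) (N : nat) (s : seq 'rV[R]_N) (x : 'rV[R]_N) : Prop :=
  exists w : seq R, [/\ size w = size s, (forall k, 0 <= w`_k),
     \sum_(k < size s) w`_k = 1 & x = \sum_(k < size s) w`_k *: s`_k].

Definition convex_set (R : realFieldType) (N : nat) (P : 'rV[R]_N -> Prop) : Prop :=
  forall x y (t : R), P x -> P y -> 0 <= t -> t <= 1 -> P ((1 - t) *: x + t *: y).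

Definition Wset (R : realFieldType) (n m c : nat) (a : 'I_m -> 'rV[int]_n)
  (d : 'I_c -> 'I_m -> nat) (S : {set {set 'I_m}}) (x : 'rV[R]_(n + c)) : Prop :=
  exists2 s, s \in S &
    conv (0 :: [seq aprime R a d (lshift c i) | i <- enum s]
            ++ [seq aprime R a d (rshift m j) | j <- enum 'I_c]) x.

(* Main.v *)
Require Import Defs.
From HB Require Import structures.
From mathcomp Require Import all_boot all_order all_algebra.
From mathcomp Require Import ring.
Import Order.TTheory GRing.Theory Num.Theory.
Local Open Scope ring_scope.
Section Gen.
Variable R : realFieldType.

Definition lin {N} (phi : 'rV[R]_N -> R) :=
  (forall x y, phi (x + y) = phi x + phi y) /\ (forall k x, phi (k *: x) = k * phi x).

Lemma lin0 {N} (phi : 'rV[R]_N -> R) : lin phi -> phi 0 = 0.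
Proof. by case=> _ hZ; rewrite -(scale0r (0 : 'rV[R]_N)) hZ mul0r. Qed.

Lemma conv_le N (L : seq 'rV[R]_N) (phi : 'rV[R]_N -> R) b x :
  lin phi -> (forall k, (k < size L)%N -> phi L`_k <= b) -> conv L x -> phi x <= b.
Proof.
move=> hl hb [w [sz w0 w1 ->]].
have [hD hZ] := hl.
rewrite (big_morph phi hD (lin0 _ hl)).
apply: (@le_trans _ _ (\sum_(k < size L) w`_k * b)).
  apply: ler_sum => k _; rewrite hZ; apply: ler_wpM2l => //; exact: hb.
by rewrite -big_distrl /= w1 mul1r.
Qed.

Lemma lin_convex N (phi : 'rV[R]_N -> R) b x y t :
  lin phi -> phi x <= b -> phi y <= b -> 0 <= t -> t <= 1 ->
  phi ((1 - t) *: x + t *: y) <= b.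
Proof.
move=> [hD hZ] hx hy t0 t1; rewrite hD !hZ.
have -> : b = (1 - t) * b + t * b by ring.
apply: lerD; apply: ler_wpM2l => //; by rewrite subr_ge0.
Qed.

Lemma conv_of_weights N (T : Type) (f : T -> 'rV[R]_N) (s : seq T) (w : T -> R) x :
  (forall t, 0 <= w t) -> \sum_(t <- s) w t <= 1 ->
  x = \sum_(t <- s) w t *: f t -> conv (0 :: map f s) x.
Proof.
move=> w0 w1 hx.
exists ((1 - \sum_(t <- s) w t) :: map w s); split.
- by rewrite /= !size_map.
- case=> [|k] /=; first by rewrite subr_ge0.
  case: (ltnP k (size (map w s))) => h; last by rewrite nth_default.
  move: h; rewrite size_map; case: s {w1 hx} => [//|t0 s'] h.
  by rewrite (nth_map t0).
- rewrite /= big_ord_recl /=.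
  have -> : \sum_(i < size (map f s)) (map w s)`_(0 + i) = \sum_(t <- s) w t.
    rewrite (_ : \sum_(t <- s) w t = \sum_(y <- map w s) y); last by rewrite big_map.
    rewrite (big_nth 0) big_mkord.
    by rewrite !size_map; apply: eq_bigr => i _; rewrite add0n.
  by rewrite subrK.
- rewrite /= big_ord_recl /= scaler0 add0r hx.
  case: s {w1 hx} => [|t0 s]; first by rewrite big_nil big_ord0.
  rewrite (big_nth t0) big_mkord size_map.
  apply: eq_bigr => i _.
  by rewrite add0n !(nth_map t0).
Qed.

End Gen.
Arguments lin {R N}. Arguments lin0 {R N}. Arguments conv_le {R N L phi b x}.
Arguments lin_convex {R N phi b x y t}. Arguments conv_of_weights {R N T f s w x}.
Set Implicit Arguments. Unset Strict Implicit.
Section Spec.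
Variables (R : realFieldType) (n m c : nat)
  (a : 'I_m -> 'rV[int]_n) (d : 'I_c -> 'I_m -> nat).

Lemma dotvD (u x y : 'rV[R]_n) : dotv u (x + y) = dotv u x + dotv u y.
Proof. by rewrite /dotv linearD mulmxDr mxE. Qed.
Lemma dotvZ (u x : 'rV[R]_n) k : dotv u (k *: x) = k * dotv u x.
Proof. by rewrite /dotv linearZ /= -scalemxAr mxE. Qed.
Lemma dotv0 (u : 'rV[R]_n) : dotv u 0 = 0.
Proof. by rewrite /dotv trmx0 mulmx0 mxE. Qed.

Lemma dotv_sum (u : 'rV[R]_n) (I : Type) (r : seq I) (P : pred I) (F : I -> 'rV[R]_n) :
  dotv u (\sum_(i <- r | P i) F i) = \sum_(i <- r | P i) dotv u (F i).
Proof. exact: (big_morph _ (dotvD u) (dotv0 u)). Qed.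

Definition ap := aprime R a d.

Lemma lsub_apl i : lsubmx (ap (lshift c i)) = vecR R (a i).
Proof. by rewrite /ap /aprime (unsplitK (inl i)) row_mxKl. Qed.
Lemma rsub_apl i j : rsubmx (ap (lshift c i)) 0 j = (d j i)%:R.
Proof. by rewrite /ap /aprime (unsplitK (inl i)) row_mxKr mxE. Qed.
Lemma lsub_apr j : lsubmx (ap (rshift m j)) = 0.
Proof. by rewrite /ap /aprime (unsplitK (inr j)) row_mxKl. Qed.
Lemma rsub_apr j j' : rsubmx (ap (rshift m j)) 0 j' = (j' == j)%:R.
Proof. by rewrite /ap /aprime (unsplitK (inr j)) row_mxKr mxE eqxx. Qed.

Definition phiU (u : 'rV[R]_n) (j : 'I_c) (x : 'rV[R]_(n + c)) :=
  dotv u (lsubmx x) - rsubmx x 0 j.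
Definition phiV (v : 'rV[R]_n) (x : 'rV[R]_(n + c)) :=
  dotv v (lsubmx x) + \sum_j rsubmx x 0 j.

Lemma lin_phiU u j : lin (phiU u j).
Proof.
split=> [x y|k x]; rewrite /phiU.
  rewrite !linearD dotvD mxE; ring.
by rewrite !linearZ dotvZ /= mxE; ring.
Qed.

Lemma lin_phiV v : lin (phiV v).
Proof.
split=> [x y|k x]; rewrite /phiV.
  rewrite !linearD dotvD /=.
  rewrite (eq_bigr (fun j => rsubmx x 0 j + rsubmx y 0 j)) ?big_split /=;
    last by move=> j _; rewrite !mxE.
  ring.
rewrite !linearZ dotvZ /=.
rewrite (eq_bigr (fun j => k * rsubmx x 0 j)) -?big_distrr /=;
  last by move=> j _; rewrite !mxE.
ring.
Qed.

Definition goodU j (u : 'rV[R]_n) := forall i, dotv u (vecR R (a i)) <= (d j i)%:R.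
Definition goodV (v : 'rV[R]_n) :=
  forall i, dotv v (vecR R (a i)) <= 1 - \sum_j ((d j i)%:R : R).

Definition Q x := (forall j u, goodU j u -> phiU u j x <= 0) /\
                  (forall v, goodV v -> phiV v x <= 1).

Lemma Q_ap k : Q (ap k).
Proof.
split.
  move=> j u gu; rewrite /phiU; case: (split_ordP k) => i ->.
    by rewrite lsub_apl rsub_apl subr_le0.
  by rewrite lsub_apr rsub_apr dotv0 sub0r oppr_le0.
move=> v gv; rewrite /phiV; case: (split_ordP k) => i ->.
  rewrite lsub_apl (eq_bigr _ (fun j _ => rsub_apl i j)).
  by rewrite -lerBrDr.
rewrite lsub_apr dotv0 add0r (eq_bigr _ (fun j _ => rsub_apr i j)).
by rewrite (bigD1 i) //= eqxx big1 ?addr0 // => j /negbTE ->.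
Qed.

Lemma Q_conv (l : seq 'I_(m + c)) x : conv (0 :: map ap l) x -> Q x.
Proof.
have gen (P : 'rV[R]_(n + c) -> Prop) : P 0 -> (forall k, P (ap k)) ->
    forall k, (k < size (0%R :: map ap l))%N -> P (0 :: map ap l)`_k.
  move=> P0 Pk [|k] //= h; move: h; rewrite size_map => h.
  case: l h => [//|t0 l'] h; by rewrite (nth_map t0).
move=> hc; split.
  move=> j u gu; apply: (conv_le (lin_phiU u j)) hc.
  apply: (gen (fun p => phiU u j p <= 0)) => [|k]; last by case: (Q_ap k) => H _; exact: H.
  by rewrite /phiU linear0 dotv0 !mxE subr0.
move=> v gv; apply: (conv_le (lin_phiV v)) hc.
apply: (gen (fun p => phiV v p <= 1)) => [|k]; last by case: (Q_ap k) => _ H; exact: H.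
by rewrite /phiV linear0 dotv0 big1 ?addr0 // => j _; rewrite !mxE.
Qed.

Lemma Q_convex x y t : Q x -> Q y -> 0 <= t -> t <= 1 -> Q ((1 - t) *: x + t *: y).
Proof.
move=> [hx1 hx2] [hy1 hy2] t0 t1; split.
  by move=> j u gu; apply: lin_convex (lin_phiU u j) _ _ t0 t1; [exact: hx1|exact: hy1].
by move=> v gv; apply: lin_convex (lin_phiV v) _ _ t0 t1; [exact: hx2|exact: hy2].
Qed.

End Spec.
Section Dec.
Variables (R : realFieldType) (n m c : nat)
  (a : 'I_m -> 'rV[int]_n) (S : {set {set 'I_m}}) (d : 'I_c -> 'I_m -> nat).
Hypothesis hfan : complete_smooth_fan R a S.
Hypothesis hnefd : forall j : 'I_c, nef_divisor R a S (fun i => (d j i)%:Z).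
Hypothesis hnefv : nef_divisor R a S (fun i => 1 - \sum_(j < c) (d j i)%:Z).

Notation ap := (ap R a d).
Notation Q := (Q a d).

Lemma Q_dec x : Q x -> exists2 s0, s0 \in S & exists lam : 'I_m -> R, exists mu : 'I_c -> R,
  [/\ (forall i, 0 <= lam i), (forall j, 0 <= mu j),
      \sum_(i in s0) lam i + \sum_j mu j <= 1 &
      x = \sum_(i in s0) lam i *: ap (lshift c i) + \sum_j mu j *: ap (rshift m j)].
Proof.
move=> [hQ1 hQ2].
case: hfan => _ _ _ _ hcomp.
have [s0 hs0 [lam [lam0 hy]]] := hcomp (lsubmx x).
pose mu j := rsubmx x 0 j - \sum_(i in s0) lam i * (d j i)%:R.
exists s0 => //; exists lam, mu.
have dotsum u : dotv u (lsubmx x) = \sum_(i in s0) lam i * dotv u (vecR R (a i)).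
  by rewrite hy dotv_sum; apply: eq_bigr => i _; rewrite dotvZ.
split => //.
- move=> j; have [u [ueq ule]] := hnefd j hs0.
  have := hQ1 j u (fun i => ule i).
  rewrite /phiU dotsum (eq_bigr (fun i => lam i * (d j i)%:R)) => [|i hi]; last by rewrite ueq.
  by rewrite subr_le0 => h; rewrite /mu subr_ge0.
- have [v [veq vle]] := hnefv hs0.
  have gv : goodV a d v by move=> i; have := vle i; rewrite /= rmorphB rmorph1 rmorph_sum.
  have := hQ2 v gv.
  rewrite /phiV dotsum (eq_bigr (fun i => lam i * (1 - \sum_j ((d j i)%:R : R)))) => [|i hi];
    last by rewrite veq //= rmorphB rmorph1 rmorph_sum.
  suff -> : \sum_(i in s0) lam i + \sum_j mu j =
     \sum_(i in s0) lam i * (1 - \sum_j ((d j i)%:R : R)) + \sum_j rsubmx x 0 j by [].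
  rewrite /mu sumrB.
  under [X in _ = X + _]eq_bigr => i _ do rewrite mulrBr mulr1 big_distrr.
  rewrite sumrB (exchange_big _ _ _ _ (fun i => i \in s0)) /=.
  ring.
- have key (A B : 'rV[R]_(n + c)) : lsubmx A = lsubmx B -> rsubmx A = rsubmx B -> A = B.
    by move=> h1 h2; rewrite -[A]hsubmxK -[B]hsubmxK h1 h2.
  apply: key.
    rewrite linearD !linear_sum /=.
    under eq_bigr => i _ do rewrite linearZ /= lsub_apl.
    under [X in _ = _ + X]eq_bigr => j _ do rewrite linearZ /= lsub_apr scaler0.
    by rewrite big1_eq addr0 hy.
  apply/rowP => j.
  rewrite linearD !linear_sum /= [in RHS]mxE !summxE.
  under eq_bigr => i _ do rewrite linearZ mxE rsub_apl.
  under [X in _ = _ + X]eq_bigr => j' _ do rewrite linearZ mxE rsub_apr.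
  rewrite (bigD1 j) //= eqxx mulr1 [X in _ + (_ + X)]big1 => [|j' hj]; last by rewrite eq_sym (negbTE hj) mulr0.
  rewrite addr0 /mu; ring.
Qed.

End Dec.
Section Fin.
Variables (R : realFieldType) (n m c : nat)
  (a : 'I_m -> 'rV[int]_n) (S : {set {set 'I_m}}) (d : 'I_c -> 'I_m -> nat).

Lemma Wlist (s : {set 'I_m}) :
  0 :: [seq aprime R a d (lshift c i) | i <- enum s]
     ++ [seq aprime R a d (rshift m j) | j <- enum 'I_c] =
  0 :: map (ap R a d) (map (@lshift m c) (enum s) ++ map (@rshift m c) (enum 'I_c)).
Proof. by rewrite map_cat -!map_comp. Qed.

Lemma W_Q x : Wset (R:=R) a d S x -> Q a d x.
Proof. by case=> s _; rewrite Wlist; apply: Q_conv. Qed.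

Lemma Q_W x : complete_smooth_fan R a S ->
  (forall j : 'I_c, nef_divisor R a S (fun i => (d j i)%:Z)) ->
  nef_divisor R a S (fun i => 1 - \sum_(j < c) (d j i)%:Z) ->
  Q a d x -> Wset (R:=R) a d S x /\ conv (0 :: [seq aprime R a d k | k <- enum 'I_(m + c)]) x.
Proof.
move=> hf hd hv hQ.
have [s0 hs0 [lam [mu [lam0 mu0 hsum hx]]]] := Q_dec hf hd hv hQ.
split.
  exists s0 => //; rewrite Wlist.
  apply: (conv_of_weights (w := fun k => match split k with inl i => lam i | inr j => mu j end)).
  - by move=> k; case: (split k).
  - rewrite big_cat !big_map /=.
    under eq_bigr => i _ do rewrite (unsplitK (inl i)).
    under [X in _ + X <= _]eq_bigr => j _ do rewrite (unsplitK (inr j)).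
    by rewrite !big_enum.
  - rewrite hx big_cat !big_map /=.
    under [X in _ = X + _]eq_bigr => i _ do rewrite (unsplitK (inl i)).
    under [X in _ = _ + X]eq_bigr => j _ do rewrite (unsplitK (inr j)).
    by rewrite !big_enum.
apply: (conv_of_weights (w := fun k => match split k with
           inl i => if i \in s0 then lam i else 0 | inr j => mu j end)).
- by move=> k; case: (split k) => // i; case: ifP.
- rewrite big_enum /= big_split_ord /=.
  under eq_bigr => i _ do rewrite (unsplitK (inl i)).
  under [X in _ + X <= _]eq_bigr => j _ do rewrite (unsplitK (inr j)).
  by rewrite -big_mkcond.
- rewrite hx big_enum /= big_split_ord /=.
  under [X in _ = X + _]eq_bigr => i _ do rewrite (unsplitK (inl i)).
  under [X in _ = _ + X]eq_bigr => j _ do rewrite (unsplitK (inr j)).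
  congr (_ + _).
  rewrite big_mkcond /=; apply: eq_bigr => i _; by case: ifP; rewrite ?scale0r.
Qed.

End Fin.
Unset Implicit Arguments.
Theorem lemma5p3 (R : realFieldType) (n m c : nat)
  (a : 'I_m -> 'rV[int]_n) (S : {set {set 'I_m}}) (d : 'I_c -> 'I_m -> nat) :
  complete_smooth_fan R a S ->
  (forall j : 'I_c, nef_divisor R a S (fun i => (d j i)%:Z)) ->
  nef_divisor R a S (fun i => 1 - \sum_(j < c) (d j i)%:Z) ->
  convex_set (Wset (R:=R) a d S) /\
  (forall x, Wset (R:=R) a d S x <->
     conv (0 :: [seq aprime R a d k | k <- enum 'I_(m + c)]) x).
Proof.
move=> hf hd hv; split.
  move=> x y t hx hy t0 t1.
  have hQ := Q_convex (W_Q hx) (W_Q hy) t0 t1.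
  by case: (Q_W hf hd hv hQ).
move=> x; split => h.
  by case: (Q_W hf hd hv (W_Q h)).
have hQ : Q a d x by apply: (Q_conv h).
by case: (Q_W hf hd hv hQ).
Qed.
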